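(* Let $\Omega\subset\mathbb{R}^d$ be open and connected, $\mathcal{I}=(0,T)$, and let $\mathbf{f}:\mathbb{R}\to\mathbb{R}^d$ be a smooth flux. Let $\phi:\Omega\times\mathcal{I}\to\mathbb{R}$ be a smooth solution of $\partial_t\phi+\nabla\cdot\mathbf{f}(\phi)=0$, and let $\eta:\mathbb{R}^d\to\mathbb{R}$ be a twice differentiable convex function, evaluated at $\nabla\phi$, i.e. $\eta=\eta(\nabla\phi)$. Then $$\partial_t\eta+\nabla\cdot\mathbf{q}=\mathscr{A},$$ where $$\mathbf{q}=\Big(\frac{\partial\eta}{\partial\nabla\phi}\cdot\nabla\phi\Big)\frac{\partial\mathbf{f}}{\partial\phi},\qquad \mathscr{A}=\big(\mathbf{H}_{\nabla\phi}\eta\,\nabla\phi\big)\cdot\Big(\mathbf{H}_{\mathbf{x}}\phi\,\frac{\partial\mathbf{f}}{\partial\phi}\Big).$$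
   Context: $\frac{\partial\eta}{\partial\nabla\phi}\in\mathbb{R}^d$ denotes the gradient of $\eta$ with respect to its (vector) argument, evaluated at $\nabla\phi$; $\frac{\partial\mathbf{f}}{\partial\phi}=\mathbf{f}'(\phi)\in\mathbb{R}^d$. $(\mathbf{H}_{\mathbf{x}}\phi)_{mn}=\partial^2\phi/\partial x_m\partial x_n$ is the spatial Hessian of $\phi$ and $(\mathbf{H}_{\nabla\phi}\eta)_{mn}=\partial^2\eta/\partial(\nabla_m\phi)\partial(\nabla_n\phi)$ is the Hessian of $\eta$ with respect to its argument, evaluated at $\nabla\phi$. *)

(* Defs.v *)
From HB Require Import structures.
From mathcomp Require Import all_boot all_order all_algebra.
From mathcomp Require Import all_classical all_reals all_analysis.
Set Implicit Arguments. Unset Strict Implicit. Unset Printing Implicit Defensive.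
Import Order.TTheory GRing.Theory Num.Theory.
Import numFieldNormedType.Exports.
Local Open Scope classical_set_scope.
Local Open Scope ring_scope.

Fixpoint Ck (R : realType) (V W : normedModType R) (k : nat)
  (U : set V) (F : V -> W) : Prop :=
  match k with
  | 0 => forall p, U p -> {for p, continuous F}
  | k'.+1 => (forall p, U p -> differentiable F p) /\
             (forall v : V, Ck k' U (fun p => 'D_v F p))
  end.

Definition smooth_on (R : realType) (V W : normedModType R)
  (U : set V) (F : V -> W) : Prop := forall k, Ck k U F.

Definition evec (R : realType) (d : nat) (i : 'I_d) : 'rV[R]_d := delta_mx 0 i.

Definition partial (R : realType) (d : nat) (i : 'I_d) (u : 'rV[R]_d -> R)
  (x : 'rV[R]_d) : R := 'D_(evec R i) u x.

Definition dotv (R : realType) (d : nat) (a b : 'rV[R]_d) : R :=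
  \sum_(i < d) a 0 i * b 0 i.

Definition gradv (R : realType) (d : nat) (u : 'rV[R]_d -> R) (x : 'rV[R]_d)
  : 'rV[R]_d := \row_i partial i u x.

Definition hessian (R : realType) (d : nat) (u : 'rV[R]_d -> R) (x : 'rV[R]_d)
  : 'M[R]_d := \matrix_(m, n) partial n (partial m u) x.

Definition twice_differentiable (R : realType) (d : nat) (u : 'rV[R]_d -> R)
  : Prop :=
  (forall y, differentiable u y) /\
  (forall (i : 'I_d) y, differentiable (partial i u) y).

(* Main.v *)
Require Import Defs.
From HB Require Import structures.
From mathcomp Require Import all_boot all_order all_algebra.
From mathcomp Require Import all_classical all_reals all_analysis.
From mathcomp Require Import ring lra.
Import Order.TTheory GRing.Theory Num.Theory.
Import numFieldNormedType.Exports.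
Local Open Scope classical_set_scope.
Local Open Scope ring_scope.

Set Implicit Arguments. Unset Strict Implicit.
Section Helpers.
Variable R : realType.


Lemma diff_eps (V W : normedModType R) (f : V -> W) x : differentiable f x ->
  forall e, 0 < e -> \forall h \near (0:V), `|f (h + x) - f x - 'd f x h| <= e * `|h|.
Proof.
move=> /diff_locally /eqaddoP fo e e0; have := fo e e0; apply: filterS => h /=.
by rewrite opprD addrA.
Qed.

Lemma is_derive_line (V : normedModType R) (F : V -> R) p u s :
  derivable F (p + s *: u) u ->
  is_derive s 1 (fun r => F (p + r *: u)) ('D_u F (p + s *: u)).
Proof.
have E : (fun h : R => h^-1 *: (((fun r => F (p + r *: u)) \o shift s) (h *: 1) - F (p + s *: u)))
  = (fun h => h^-1 *: ((F \o shift (p + s *: u)) (h *: u) - F (p + s *: u))).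
  apply/funext => h /=; congr (_ *: (F _ - _)).
  by rewrite scalerDl [h%:A]mulr1 addrCA.
move=> D; apply: DeriveDef; first by rewrite /derivable E.
by rewrite /derive E.
Qed.
Lemma near_norm (V : normedModType R) (x : V) (P : V -> Prop) :
  (\forall y \near x, P y) -> exists2 r, 0 < r & forall y, `|x - y| < r -> P y.
Proof. by move=> /nbhs_normP [r r0 H]; exists r => // y /H. Qed.

Lemma subDA (V : zmodType) (a w : V) : a - (a + w) = - w.
Proof. by rewrite opprD addrA subrr sub0r. Qed.

Lemma schwarz_half (V : normedModType R) (F : V -> R) (a u v : V) (e : R) :
  0 < e -> (\forall p \near a, derivable F p u) -> differentiable ('D_u F) a ->
  exists2 del, 0 < del & forall h, 0 < h < del ->
   `|F (a + h *: v + h *: u) - F (a + h *: u) - (F (a + h *: v) - F a)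
       - h * (h * 'd ('D_u F) a v)| <= h * (h * (e * (2 * `|u| + `|v|))).
Proof.
move=> e0 /near_norm [r1 r1pos B1] Dd.
have /near_norm [r2 r2pos B2] := diff_eps Dd e0.
set K := `|u| + `|v| + 1.
have K0 : 0 < K by rewrite /K ltr_wpDl // addr_ge0.
exists (Num.min r1 r2 / K); first by rewrite divr_gt0 // lt_min r1pos r2pos.
move=> h /andP[h0 hd].
have hK : h * K < Num.min r1 r2 by rewrite -ltr_pdivlMr.
have hK1 : h * K < r1 by apply: (lt_le_trans hK); rewrite ge_min lexx.
have hK2 : h * K < r2 by apply: (lt_le_trans hK); rewrite ge_min lexx orbT.
have nu := normr_ge0 u; have nv := normr_ge0 v.
have bnd : forall s, 0 <= s <= h -> `|h *: v + s *: u| <= h * (`|u| + `|v|).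
  move=> s /andP[s0 sh]; rewrite (le_trans (ler_normD _ _)) // !normrZ.
  rewrite (ger0_norm (ltW h0)) (ger0_norm s0); nra.
have hKu : h * (`|u| + `|v|) < h * K by rewrite ltr_pM2l // /K ltrDl.
have D1 : forall s, 0 <= s <= h -> derivable F (a + h *: v + s *: u) u.
  move=> s hs; apply: B1; rewrite -addrA subDA normrN.
  by rewrite (le_lt_trans (bnd s hs)) // (lt_trans hKu).
have D2 : forall s, 0 <= s <= h -> derivable F (a + s *: u) u.
  move=> s /andP[s0 sh]; apply: B1; rewrite subDA normrN.
  rewrite normrZ (ger0_norm s0) (le_lt_trans _ (lt_trans hKu hK1)) //; nra.
pose G := (fun r => F (a + h *: v + r *: u)) - (fun r => F (a + r *: u)).
pose dG := fun r => 'D_u F (a + h *: v + r *: u) - 'D_u F (a + r *: u).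
have GD : forall s, 0 <= s <= h -> is_derive s 1 G (dG s).
  move=> s hs; apply: is_deriveB; apply: is_derive_line; [exact: D1|exact: D2].
have [c /[1!in_itv] /andP[c0 ch] /= MV] : exists2 c, c \in `]0, h[ & G h - G 0 = dG c * (h - 0).
  apply: MVT => //.
    move=> x /[1!in_itv] /andP[x0 xh]; apply: GD; rewrite !ltW //.
  apply: derivable_within_continuous => x; rewrite in_itv /= => xin.
  by have [] := GD x xin.
move: MV; rewrite /G !fctE /= !scale0r !addr0 subr0 => MV.
rewrite MV /dG.
set L := 'd ('D_u F) a.
have E1 : 'D_u F (a + h *: v + c *: u) = 'D_u F ((h *: v + c *: u) + a).
  by rewrite (addrC _ a) addrA.
have E2 : 'D_u F (a + c *: u) = 'D_u F ((c *: u) + a) by rewrite (addrC _ a).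
have R1 := B2 (h *: v + c *: u).
have R2 := B2 (c *: u).
have HL : L (h *: v + c *: u) = h * L v + L (c *: u) by rewrite linearD linearZ.
have hc : 0 <= c <= h by rewrite !ltW.
have w1b := bnd c hc.
have w2b : `|c *: u| <= h * `|u|.
  by rewrite normrZ (ger0_norm (ltW c0)) ler_wpM2r // ltW.
have {}R1 : `|'D_u F (h *: v + c *: u + a) - 'D_u F a - L (h *: v + c *: u)| <= e * (h * (`|u| + `|v|)).
  apply: (le_trans (R1 _)); first by rewrite sub0r normrN (le_lt_trans w1b) // (lt_trans hKu).
  by rewrite ler_pM2l.
have {}R2 : `|'D_u F (c *: u + a) - 'D_u F a - L (c *: u)| <= e * (h * `|u|).
  apply: (le_trans (R2 _)); last by rewrite ler_pM2l.
  rewrite sub0r normrN (le_lt_trans w2b) //.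
  by rewrite (le_lt_trans _ (lt_trans hKu hK2)) // ler_pM2l // lerDl.
rewrite E1 E2.
have -> : ('D_u F (h *: v + c *: u + a) - 'D_u F (c *: u + a)) * h - h * (h * L v)
  = h * (('D_u F (h *: v + c *: u + a) - 'D_u F a - L (h *: v + c *: u))
      - ('D_u F (c *: u + a) - 'D_u F a - L (c *: u))) by rewrite HL; ring.
rewrite normrM (ger0_norm (ltW h0)) ler_pM2l //.
apply: (le_trans (ler_normB _ _)).
apply: (le_trans (lerD R1 R2)).
nra.
Qed.

Lemma alg4 (f1 f2 f3 f4 h X Y : R) : (f1 - f3 - (f2 - f4) - h*(h*Y)) - (f1 - f2 - (f3 - f4) - h*(h*X)) = h*(h*(X-Y)).
Proof. by ring. Qed.

Lemma eps_zero (x K : R) : 0 <= K -> (forall e, 0 < e -> `|x| <= e * K) -> x = 0.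
Proof.
move=> K0 H; apply/eqP/negPn/negP => x0.
have nx : 0 < `|x| by rewrite normr_gt0.
have e0 : 0 < `|x| / (K + 1) by rewrite divr_gt0 // ltr_wpDl.
have := H _ e0; rewrite mulrAC ler_pdivlMr ?ltr_wpDl //; nra.
Qed.

Lemma schwarz (V : normedModType R) (F : V -> R) (a u v : V) :
  (\forall p \near a, derivable F p u) -> (\forall p \near a, derivable F p v) ->
  differentiable ('D_u F) a -> differentiable ('D_v F) a ->
  'D_v ('D_u F) a = 'D_u ('D_v F) a.
Proof.
move=> Hu Hv Du Dv; rewrite !deriveE //.
apply/eqP; rewrite -subr_eq0; apply/eqP.
apply: (@eps_zero _ (3 * (`|u| + `|v|))); first by rewrite mulr_ge0 // addr_ge0.
move=> e e0.
have [d1 d10 H1] := @schwarz_half _ F a u v e e0 Hu Du.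
have [d2 d20 H2] := @schwarz_half _ F a v u e e0 Hv Dv.
set h := Num.min d1 d2 / 2.
have h0 : 0 < h by rewrite divr_gt0 // lt_min d10 d20.
have hm : h < Num.min d1 d2 by rewrite /h ltr_pdivrMr // ltr_pMr ?ltr1n // lt_min d10 d20.
have h1 : h < d1 by apply: (lt_le_trans hm); rewrite ge_min lexx.
have h2 : h < d2 by apply: (lt_le_trans hm); rewrite ge_min lexx orbT.
have {H1}H1 : `|F (a + h *: v + h *: u) - F (a + h *: u) - (F (a + h *: v) - F a) - h * (h * 'd ('D_u F) a v)| <= h * (h * (e * (2 * `|u| + `|v|))) by apply: H1; rewrite h0 h1.
have {H2}H2 : `|F (a + h *: u + h *: v) - F (a + h *: v) - (F (a + h *: u) - F a) - h * (h * 'd ('D_v F) a u)| <= h * (h * (e * (2 * `|v| + `|u|))) by apply: H2; rewrite h0 h2.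
have E : a + h *: u + h *: v = a + h *: v + h *: u by rewrite addrAC.
rewrite E in H2.
have H := le_trans (ler_normB _ _) (lerD H2 H1).
rewrite alg4 in H.
rewrite normrM (ger0_norm (ltW h0)) normrM (ger0_norm (ltW h0)) -!mulrDr !ler_pM2l // in H.
by apply: (le_trans H); rewrite ler_pM2l //; lra.
Qed.


Lemma derive_pair1 (V W X : normedModType R) (G : V * W -> X) y s w :
  'D_w (fun y => G (y, s)) y = 'D_((w, 0) : V * W) G (y, s).
Proof.
rewrite /derive; congr (lim (_ @ 0^')); apply/funext => h /=.
congr (_ *: (G _ - _)); congr pair => /=; by rewrite ?scaler0 ?add0r.
Qed.

Lemma derive_pair2 (V W X : normedModType R) (G : V * W -> X) y s r :
  'D_r (fun s => G (y, s)) s = 'D_((0, r) : V * W) G (y, s).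
Proof.
rewrite /derive; congr (lim (_ @ 0^')); apply/funext => h /=.
congr (_ *: (G _ - _)); congr pair => /=; by rewrite ?scaler0 ?add0r.
Qed.

Lemma diff_pair1 (V W X : normedModType R) (G : V * W -> X) y s :
  differentiable G (y, s) -> differentiable (fun y => G (y, s)) y.
Proof.
move=> dG; apply: (@differentiable_comp _ _ _ _ (fun y => (y, s)) G).
  by apply: differentiable_pair.
exact: dG.
Qed.

Lemma diff_pair2 (V W X : normedModType R) (G : V * W -> X) y s :
  differentiable G (y, s) -> differentiable (fun s => G (y, s)) s.
Proof.
move=> dG; apply: (@differentiable_comp _ _ _ _ (fun s => (y, s)) G).
  by apply: differentiable_pair.
exact: dG.
Qed.

Lemma chainD (U V W : normedModType R) (f : U -> V) (g : V -> W) x w :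
  differentiable f x -> differentiable g (f x) ->
  'D_w (g \o f) x = 'd g (f x) ('D_w f x).
Proof.
move=> df dg; rewrite deriveE; last exact: differentiable_comp.
by rewrite diff_comp // deriveE.
Qed.

Lemma dR (W : normedModType R) (g : R -> W) r z :
  differentiable g r -> 'd g r z = z *: 'D_1 g r.
Proof. by move=> dg; rewrite diff1E // derive1E. Qed.

Lemma dRow d (g : 'rV[R]_d -> R) p z :
  differentiable g p -> 'd g p z = \sum_(m < d) z 0 m * 'D_(delta_mx 0 m) g p.
Proof.
move=> dg.
have E : z = \sum_(m < d) z 0 m *: (delta_mx 0 m : 'rV[R]_d).
  apply/rowP => j; rewrite summxE (bigD1 j) //= big1 ?addr0.
    by rewrite !mxE !eqxx mulr1.
  by move=> i ij; rewrite !mxE eqxx /= eq_sym (negbTE ij) mulr0.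
rewrite {1}E linear_sum; apply: eq_bigr => m _.
by rewrite linearZ /= deriveE.
Qed.

Lemma diff_row (V : normedModType R) n (h : 'I_n -> V -> R) x :
  (forall i, differentiable (h i) x) ->
  differentiable (fun y => \row_i h i y : 'rV[R]_n) x.
Proof.
move=> dh.
have -> : (fun y => \row_i h i y : 'rV[R]_n) =
    \sum_(i < n) (fun y => h i y *: (delta_mx 0 i : 'rV[R]_n)).
  rewrite fct_sumE; apply/funext => y; apply/rowP => j.
  rewrite summxE (bigD1 j) //= big1 ?addr0.
    by rewrite !mxE !eqxx mulr1.
  by move=> i ij; rewrite !mxE eqxx /= eq_sym (negbTE ij) mulr0.
by apply: differentiable_sum => i; apply: differentiableZl.
Qed.

Lemma derive_row (V : normedModType R) n (h : 'I_n -> V -> R) x w :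
  (forall i, differentiable (h i) x) ->
  'D_w (fun y => \row_i h i y : 'rV[R]_n) x = \row_i 'D_w (h i) x.
Proof.
move=> dh; rewrite derive_mx; last exact/diff_derivable/diff_row.
apply/rowP => j; rewrite !mxE; congr (derive _ x w); apply/funext => y.
by rewrite mxE.
Qed.


Lemma final_alg d (G a b e : 'I_d -> R) (S H : 'I_d -> 'I_d -> R) :
 (forall m n, S m n = S n m) -> (forall m n, H m n = H n m) ->
 \sum_(m < d) e m * (- \sum_(i < d) (b i * G m * G i + a i * S i m))
 + \sum_(k < d) ((\sum_(m < d) ((\sum_(n < d) S n k * H m n) * G m + e m * S m k)) * a k
                + (\sum_(m < d) e m * G m) * (b k * G k))
 = \sum_(n < d) (\sum_(m < d) G m * H n m) * (\sum_(k < d) a k * S n k).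
Proof.
move=> Ss Hs.
have Y1 : \sum_(k < d) (\sum_(m < d) (\sum_(n < d) S n k * H m n) * G m) * a k
    = \sum_(n < d) (\sum_(m < d) G m * H n m) * (\sum_(k < d) a k * S n k).
  under eq_bigr do rewrite mulr_suml; under eq_bigr do under eq_bigr do rewrite !mulr_suml.
  under [RHS]eq_bigr do rewrite mulr_suml; under [RHS]eq_bigr do under eq_bigr do rewrite mulr_sumr.
  rewrite exchange_big /=; under eq_bigr do rewrite exchange_big /=.
  rewrite exchange_big /=; apply: eq_bigr => n _; apply: eq_bigr => m _; apply: eq_bigr => k _.
  by rewrite (Hs m n); ring.
have X1 : \sum_(m < d) e m * (- \sum_(i < d) (b i * G m * G i + a i * S i m))
   = - \sum_(k < d) (\sum_(m < d) e m * G m) * (b k * G k)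
     - \sum_(k < d) (\sum_(m < d) e m * S m k) * a k.
  under eq_bigr do rewrite mulrN mulr_sumr.
  rewrite sumrN -opprD -big_split /=; congr (- _).
  under [RHS]eq_bigr do rewrite !mulr_suml -big_split /=.
  rewrite [RHS]exchange_big /=; apply: eq_bigr => m _; apply: eq_bigr => k _.
  rewrite (Ss k m); ring.
rewrite X1 -Y1.
have -> : \sum_(k < d)
     ((\sum_(m < d) ((\sum_(n < d) S n k * H m n) * G m + e m * S m k)) * a k +
      (\sum_(m < d) e m * G m) * (b k * G k)) =
  \sum_(k < d) (\sum_(m < d) (\sum_(n < d) S n k * H m n) * G m) * a k +
  \sum_(k < d) (\sum_(m < d) e m * S m k) * a k +
  \sum_(k < d) (\sum_(m < d) e m * G m) * (b k * G k).
  rewrite -!big_split /=; apply: eq_bigr => k _; rewrite big_split /=; ring.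
ring.
Qed.

Lemma chainR (V : normedModType R) (h : V -> R) (k : R -> R) y w :
  differentiable h y -> differentiable k (h y) ->
  'D_w (k \o h) y = 'D_1 k (h y) * 'D_w h y.
Proof. by move=> dh dk; rewrite chainD // dR // mulrC. Qed.

Lemma dsumL (V : normedModType R) n (h : 'I_n -> V -> R) x v :
  (forall i, differentiable (h i) x) ->
  'D_v (fun y => \sum_(i < n) h i y) x = \sum_(i < n) 'D_v (h i) x.
Proof.
move=> H; rewrite -derive_sum; last by move=> i; apply: diff_derivable.
by rewrite fct_sumE.
Qed.

Lemma diffsumL (V : normedModType R) n (h : 'I_n -> V -> R) x :
  (forall i, differentiable (h i) x) ->
  differentiable (fun y => \sum_(i < n) h i y) x.
Proof. by move=> H; have := differentiable_sum H; rewrite fct_sumE. Qed.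

Lemma dNL (V : normedModType R) (f : V -> R) x v :
  differentiable f x -> 'D_v (fun y => - f y) x = - 'D_v f x.
Proof. by move=> H; apply: deriveN; apply: diff_derivable. Qed.

Lemma diffNL (V : normedModType R) (f : V -> R) x :
  differentiable f x -> differentiable (fun y => - f y) x.
Proof. by move=> H; apply: differentiableN. Qed.

Lemma dML (V : normedModType R) (f g : V -> R) x v :
  differentiable f x -> differentiable g x ->
  'D_v (fun y => f y * g y) x = f x * 'D_v g x + g x * 'D_v f x.
Proof. by move=> H1 H2; apply: deriveM; apply: diff_derivable. Qed.

Lemma diffML (V : normedModType R) (f g : V -> R) x :
  differentiable f x -> differentiable g x ->
  differentiable (fun y => f y * g y) x.
Proof. by move=> H1 H2; apply: differentiableM. Qed.

Lemma dotv_mul d (a b : 'rV[R]_d) (M N : 'M[R]_d) :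
  dotv (a *m M^T) (b *m N^T) =
  \sum_(n < d) (\sum_(m < d) a 0 m * M n m) * (\sum_(k < d) b 0 k * N n k).
Proof. by apply: eq_bigr => n _; rewrite !mxE; congr (_ * _); apply: eq_bigr => m _; rewrite mxE. Qed.

Lemma hessianE d (u : 'rV[R]_d -> R) x m n : hessian u x m n = partial n (partial m u) x.
Proof. by rewrite mxE. Qed.

Lemma gradvE d (u : 'rV[R]_d -> R) x m : gradv u x 0 m = partial m u x.
Proof. by rewrite mxE. Qed.

End Helpers.

Unset Implicit Arguments. Set Strict Implicit.

Theorem lemma1 (R : realType) (d : nat) (Omega : set 'rV[R]_d) (T : R)
  (f : R -> 'rV[R]_d) (phi : 'rV[R]_d -> R -> R) (eta : 'rV[R]_d -> R) :
  open Omega -> connected Omega ->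
  smooth_on setT f ->
  smooth_on [set p : 'rV[R]_d * R | Omega p.1 /\ 0 < p.2 < T]
            (fun p => phi p.1 p.2) ->
  (forall x t, Omega x -> 0 < t < T ->
     derive1 (fun s => phi x s) t
     + \sum_(i < d) partial i (fun y => f (phi y t) 0 i) x = 0) ->
  twice_differentiable eta ->
  convex_function setT eta ->
  let g := fun x t => gradv (fun y => phi y t) x in
  let q := fun x t =>
     dotv (gradv eta (g x t)) (g x t) *: (derive1 f (phi x t)) in
  let A := fun x t =>
     dotv ((g x t) *m (hessian eta (g x t))^T)
          ((derive1 f (phi x t)) *m (hessian (fun y => phi y t) x)^T) in
  forall x t, Omega x -> 0 < t < T ->
    derive1 (fun s => eta (g x s)) t
    + \sum_(k < d) partial k (fun y => q y t 0 k) x = A x t.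
Proof.
move=> Oo Oc sf sphi pde tde cvx g q A x t Ox tI.
set U := [set p : 'rV[R]_d * R | Omega p.1 /\ 0 < p.2 < T] in sphi.
set F := (fun p : 'rV[R]_d * R => phi p.1 p.2) in sphi.
have UF : forall p, U p -> differentiable F p := (sphi 1%N).1.
have UDF : forall v p, U p -> differentiable ('D_v F) p := fun v => ((sphi 2%N).2 v).1.
have df : forall r, differentiable f r := fun r => (sf 1%N).1 r I.
have ddf : forall r, differentiable ('D_1 f) r := fun r => ((sf 2%N).2 1).1 r I.
have [dEta dDeta] := tde.
have p0U : U (x, t) by split.
have nO : \forall y \near x, Omega y by apply: Oo.
have nT : \forall s \near t, 0 < s < T.
  have [t0 tT] := andP tI.
  apply/nbhs_ballP; exists (Num.min t (T - t)); first by rewrite /= lt_min t0 subr_gt0.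
  move=> s; rewrite -ball_normE /= lt_min !ltr_distlC => /andP[/andP[a1 a2] /andP[b1 b2]].
  apply/andP; split; lra.
have nU : \forall p \near (x, t), U p.
  exists (Omega, [set s | 0 < s < T]); first by split.
  by move=> [y s] /= [].
pose E (i : 'I_d) : 'rV[R]_d * R := (delta_mx 0 i, 0).
pose Et : 'rV[R]_d * R := (0, 1).
pose Fi i := 'D_(E i) F.
pose Ft := 'D_Et F.
pose Gv p := \row_i Fi i p : 'rV[R]_d.
have gE : forall y s, g y s = Gv (y, s).
  by move=> y s; apply/rowP => i; rewrite !mxE /partial /evec; exact: (derive_pair1 F y s (delta_mx 0 i)).
have dFi : forall i p, U p -> differentiable (Fi i) p := fun i => UDF (E i).
have dGv : forall p, U p -> differentiable Gv p.
  by move=> p Up; apply: diff_row => i; exact: dFi.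
have nDer : forall v, \forall p \near (x, t), derivable F p v.
  by move=> v; apply: filterS nU => p Up; apply: diff_derivable; exact: UF.
have SchF : forall u v, 'D_v ('D_u F) (x, t) = 'D_u ('D_v F) (x, t).
  by move=> u v; apply: schwarz; [exact: nDer|exact: nDer|exact: UDF|exact: UDF].
pose f1 k r := ('D_1 f r) 0 k.
have f1E : forall r k, derive1 f r 0 k = f1 k r by move=> r k; rewrite derive1E.
have dfi : forall k r, differentiable (fun r => f r 0 k) r.
  move=> k r; apply: (@differentiable_comp _ _ _ _ f (fun N : 'rV[R]_d => N 0 k)) => //.
  exact: differentiable_coord.
have fiD : forall k r, 'D_1 (fun r => f r 0 k) r = f1 k r.
  by move=> k r; rewrite /f1 derive_mx ?mxE //; apply: diff_derivable.
have df1 : forall k r, differentiable (f1 k) r.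
  move=> k r; apply: (@differentiable_comp _ _ _ _ ('D_1 f) (fun N : 'rV[R]_d => N 0 k)) => //.
  exact: differentiable_coord.
pose f2 k r := 'D_1 (f1 k) r.
have DG : forall w p, U p -> 'D_w Gv p = \row_i 'D_w (Fi i) p.
  by move=> w p Up; apply: derive_row => i; exact: dFi.
have LHS : derive1 (fun s => eta (g x s)) t
    = \sum_(m < d) 'D_Et (Fi m) (x, t) * 'D_(delta_mx 0 m) eta (Gv (x, t)).
  have -> : (fun s => eta (g x s)) = eta \o (fun s => Gv (x, s)).
    by apply/funext => s; rewrite /= gE.
  rewrite derive1E chainD; [| exact: diff_pair2 (dGv _ p0U) | exact: dEta].
  rewrite dRow // (derive_pair2 Gv x t 1) DG //.
  by apply: eq_bigr => m _; rewrite mxE.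
have UtO : forall y, Omega y -> U (y, t) by move=> y Oy; split.
have dFt : forall y, Omega y -> differentiable (fun y' => F (y', t)) y.
  by move=> y Oy; apply: diff_pair1; apply: UF; exact: UtO.
have PDE : forall y, Omega y -> Ft (y, t) = - \sum_(i < d) f1 i (F (y, t)) * Fi i (y, t).
  move=> y Oy; have := pde y t Oy tI.
  have -> : derive1 (fun s => phi y s) t = Ft (y, t).
    by rewrite derive1E; exact: (derive_pair2 F y t 1).
  have Pi : forall i, partial i (fun y' => f (phi y' t) 0 i) y = f1 i (F (y, t)) * Fi i (y, t).
    move=> i; rewrite /partial /evec.
    have -> : (fun y' => f (phi y' t) 0 i) = (fun r => f r 0 i) \o (fun y' => F (y', t)) by [].
    rewrite chainR; [|exact: dFt|exact: dfi].
    by rewrite fiD (derive_pair1 F y t).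
  under eq_bigr do rewrite Pi.
  by move/eqP; rewrite addr_eq0 => /eqP ->.
have dFix : forall i, differentiable (fun y => Fi i (y, t)) x.
  by move=> i; apply: diff_pair1; exact: dFi.
have df1F : forall i, differentiable (fun y => f1 i (F (y, t))) x.
  move=> i; apply: (@differentiable_comp _ _ _ _ (fun y => F (y, t)) (f1 i)).
    exact: dFt.
  exact: df1.
have Df1F : forall i w, 'D_w (fun y => f1 i (F (y, t))) x = f2 i (F (x, t)) * 'D_(w, 0) F (x, t).
  move=> i w; have -> : (fun y => f1 i (F (y, t))) = f1 i \o (fun y => F (y, t)) by [].
  by rewrite chainR; [rewrite (derive_pair1 F x t)|exact: dFt|exact: df1].
have Tm : forall m, 'D_Et (Fi m) (x, t) = - \sum_(i < d)
    (f1 i (F (x, t)) * 'D_(E m) (Fi i) (x, t) + Fi i (x, t) * (f2 i (F (x, t)) * Fi m (x, t))).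
  move=> m; rewrite /Fi SchF.
  have -> : 'D_(E m) Ft (x, t) = 'D_(delta_mx 0 m) (fun y => Ft (y, t)) x.
    by rewrite (derive_pair1 Ft x t).
  have NE : \forall y \near x, Ft (y, t) = - \sum_(i < d) f1 i (F (y, t)) * Fi i (y, t).
    by apply: filterS nO => y Oy; exact: PDE.
  rewrite (near_eq_derive _ NE) dNL; last first.
    by apply: diffsumL => i; apply: diffML; [exact: df1F|exact: dFix].
  rewrite dsumL; last by move=> i; apply: diffML; [exact: df1F|exact: dFix].
  congr (- _); apply: eq_bigr => i _.
  rewrite dML; [|exact: df1F|exact: dFix].
  by rewrite Df1F (derive_pair1 (Fi i) x t).
pose em m := 'D_(delta_mx 0 m : 'rV[R]_d) eta.
have demG : forall m, differentiable (fun y => em m (Gv (y, t))) x.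
  move=> m; apply: (@differentiable_comp _ _ _ _ (fun y => Gv (y, t)) (em m)).
    by apply: diff_pair1; exact: dGv.
  exact: dDeta.
have Dem : forall m k, 'D_(delta_mx 0 k : 'rV[R]_d) (fun y => em m (Gv (y, t))) x
    = \sum_(n < d) 'D_(E k) (Fi n) (x, t) * 'D_(delta_mx 0 n : 'rV[R]_d) (em m) (Gv (x, t)).
  move=> m k; have -> : (fun y => em m (Gv (y, t))) = em m \o (fun y => Gv (y, t)) by [].
  rewrite chainD; [|by apply: diff_pair1; exact: dGv|exact: dDeta].
  rewrite dRow; last exact: dDeta.
  rewrite (derive_pair1 Gv x t) DG //.
  by apply: eq_bigr => n _; rewrite mxE.
have Qk : forall k, partial k (fun y => q y t 0 k) x =
   (\sum_(m < d) em m (Gv (x, t)) * Fi m (x, t)) * (f2 k (F (x, t)) * Fi k (x, t))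
   + f1 k (F (x, t)) * \sum_(m < d) (em m (Gv (x, t)) * 'D_(E k) (Fi m) (x, t)
      + Fi m (x, t) * \sum_(n < d) 'D_(E k) (Fi n) (x, t) * 'D_(delta_mx 0 n : 'rV[R]_d) (em m) (Gv (x, t))).
  move=> k.
  have -> : (fun y => q y t 0 k) = (fun y => (\sum_(m < d) em m (Gv (y, t)) * Fi m (y, t)) * f1 k (F (y, t))).
    apply/funext => y; rewrite /q mxE f1E gE /dotv; congr (_ * _).
    by apply: eq_bigr => m _; rewrite !mxE.
  have dS : differentiable (fun y => \sum_(m < d) em m (Gv (y, t)) * Fi m (y, t)) x.
    by apply: diffsumL => m; apply: diffML; [exact: demG|exact: dFix].
  rewrite /partial /evec dML //.
  rewrite Df1F /=; congr (_ + _).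
  rewrite dsumL; last by move=> m; apply: diffML; [exact: demG|exact: dFix].
  congr (_ * _); apply: eq_bigr => m _.
  rewrite dML; [|exact: demG|exact: dFix].
  by rewrite Dem (derive_pair1 (Fi m) x t).
have phiE : forall n, partial n (fun y => phi y t) = (fun y => Fi n (y, t)).
  by move=> n; apply/funext => y; rewrite /partial /evec; exact: (derive_pair1 F y t).
have GvE : forall p m, Gv p 0 m = Fi m p by move=> p m; rewrite mxE.
have AE : A x t = \sum_(n < d) (\sum_(m < d) Fi m (x, t) * 'D_(delta_mx 0 m : 'rV[R]_d) (em n) (Gv (x, t)))
    * (\sum_(k < d) f1 k (F (x, t)) * 'D_(E k) (Fi n) (x, t)).
  rewrite /A dotv_mul gE; apply: eq_bigr => n _; congr (_ * _).
    by apply: eq_bigr => m _; rewrite GvE hessianE.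
  apply: eq_bigr => k _; rewrite f1E hessianE phiE.
  by rewrite /partial /evec (derive_pair1 (Fi n) x t).
have Ss : forall m n, 'D_(E n) (Fi m) (x, t) = 'D_(E m) (Fi n) (x, t).
  by move=> m n; apply: SchF.
have Hs : forall m n, 'D_(delta_mx 0 n : 'rV[R]_d) (em m) (Gv (x, t))
    = 'D_(delta_mx 0 m : 'rV[R]_d) (em n) (Gv (x, t)).
  move=> m n; apply: schwarz; [| |exact: dDeta|exact: dDeta];
    by apply: filterE => y; apply: diff_derivable.
have LHS' : derive1 (fun s => eta (g x s)) t = \sum_(m < d) (- \sum_(i < d)
    (f1 i (F (x, t)) * 'D_(E m) (Fi i) (x, t) + Fi i (x, t) * (f2 i (F (x, t)) * Fi m (x, t))))
    * em m (Gv (x, t)).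
  by rewrite LHS; apply: eq_bigr => m _; rewrite Tm.
rewrite LHS' AE (eq_bigr _ (fun k _ => Qk k)).
rewrite -(@final_alg R d (fun m => Fi m (x, t)) (fun k => f1 k (F (x, t))) (fun k => f2 k (F (x, t)))
   (fun m => em m (Gv (x, t))) (fun m n => 'D_(E n) (Fi m) (x, t))
   (fun m n => 'D_(delta_mx 0 n : 'rV[R]_d) (em m) (Gv (x, t))) Ss Hs) /=.
congr (_ + _).
  apply: eq_bigr => m _; rewrite mulrC; congr (_ * - _); apply: eq_bigr => i _; ring.
apply: eq_bigr => k _; rewrite addrC; congr (_ + _); rewrite mulrC; congr (_ * _).
apply: eq_bigr => m _; ring.
Qed.
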